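(* Let $A=\mathbb{Q}[X_k:k\in\mathbb{N}]$ be the polynomial ring over $\mathbb{Q}$ in countably infinitely many variables. Then $A$ is finitely Jacobson but not Jacobson.
   Context: All rings are commutative with identity. The setting is constructive mathematics: no law of excluded middle and no Zorn's lemma. For a ring $A$ and a subset $U\subseteq A$, $\langle U\rangle_A$ denotes the ideal generated by $U$. Define $\mathrm{Nil}_A U:=\{a\in A:\exists n\ge 0,\ a^n\in\langle U\rangle_A\}$ and $\mathrm{Jac}_A U:=\{a\in A:\forall b\in A,\ 1\in\langle U\cup\{1-ab\}\rangle_A\}$. A ring $A$ is called Jacobson if every ideal $I$ of $A$ satisfies $\mathrm{Jac}_A I\subseteq \mathrm{Nil}_A I$. It is called finitely Jacobson if this inclusion holds for every finitely generated ideal $I$ of $A$. ''Not Jacobson'' means that there is an ideal $I$ of $A$ and an element of $\mathrm{Jac}_A I$ not in $\mathrm{Nil}_A I$. *)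

(* Defs.v *)
From HB Require Import structures.
From mathcomp Require Import all_boot all_order all_algebra.
From mathcomp Require Import finmap.
From mathcomp.multinomials Require Import monalg.
Set Implicit Arguments. Unset Strict Implicit. Unset Printing Implicit Defensive.
Import GRing.Theory.
Local Open Scope ring_scope.

Section Jacobson.
Variable R : comNzRingType.

Definition is_ideal (I : R -> Prop) : Prop :=
  [/\ I 0, (forall x y, I x -> I y -> I (x + y)) & (forall r x, I x -> I (r * x))].

Definition ideal_gen (U : R -> Prop) (x : R) : Prop :=
  exists s : seq (R * R), (forall p, p \in s -> U p.2) /\
                           x = \sum_(p <- s) p.1 * p.2.

Definition Nil (U : R -> Prop) (a : R) : Prop :=
  exists n : nat, ideal_gen U (a ^+ n).

Definition Jac (U : R -> Prop) (a : R) : Prop :=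
  forall b : R, ideal_gen (fun x => U x \/ x = 1 - a * b) 1.

Definition finitely_generated (I : R -> Prop) : Prop :=
  exists s : seq R, forall x, I x <-> ideal_gen (fun y => y \in s) x.

Definition Jacobson : Prop :=
  forall I : R -> Prop, is_ideal I -> forall a, Jac I a -> Nil I a.

Definition finitely_Jacobson : Prop :=
  forall I : R -> Prop, is_ideal I -> finitely_generated I ->
    forall a, Jac I a -> Nil I a.

(* "not Jacobson" in the positive sense of the paper *)
Definition not_Jacobson : Prop :=
  exists I : R -> Prop, is_ideal I /\ exists a, Jac I a /\ ~ Nil I a.

End Jacobson.

(* Q[X_k : k in N]: the monoid algebra of commutative monomials over nat,
   with coefficients in rat; X_k is << ucm k >>. *)
Definition QX : comNzRingType := {malg rat[{cmonom nat}]}.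

(* Main.v *)
Require Import Defs.
From HB Require Import structures.
From mathcomp Require Import all_boot all_order all_algebra.
From mathcomp Require Import finmap.
From mathcomp.multinomials Require Import monalg.
From mathcomp Require Import fraction.
From mathcomp Require Import ring.
Set Implicit Arguments. Unset Strict Implicit. Unset Printing Implicit Defensive.
Import GRing.Theory.
Local Open Scope ring_scope.

Local Notation "x *M y" := (mmul x y) (at level 40, left associativity).
Local Notation "'1M'" := (@mone _).

Definition MA := {malg rat[{cmonom nat}]}.
Definition zN (N : nat) (m : cmonom nat) : cmonom nat :=
  mkcmonom [fsfun i in (finsupp m `\` [fset N])%fset => m i | 0%N].
Lemma zNE N m i : zN N m i = if i == N then 0%N else m i.
Proof.
rewrite /zN cmE fsfun_fun !inE; case: eqP => //= _; case: finsuppP => //.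
Qed.

Definition h1 (N : nat) (m : cmonom nat) : {poly MA} :=
  'X^(m N) * (<<zN N m>> : MA)%:P.

Lemma monUU (k1 k2 : cmonom nat) : (<<k1>> : MA) * <<k2>> = << (k1 *M k2) >>.
Proof. by rewrite malgM_def fgmulUU mulr1. Qed.

Lemma h1_mm N : mmorphism (h1 N).
Proof.
split.
  move=> m1 m2; rewrite /h1 cmM exprD.
  have -> : zN N (m1 *M m2) = (zN N m1 *M zN N m2).
    by apply/eqP/cmP=> i; rewrite !(cmM, zNE); case: eqP.
  by rewrite -monUU polyCM; rewrite mulrACA.
rewrite /h1 cm1 expr0 mul1r.
have -> : zN N 1M = 1M by apply/eqP/cmP=> i; rewrite zNE cm1; case: eqP.
by [].
Qed.
HB.instance Definition _ N := isMultiplicative.Build _ _ (h1 N) (h1_mm N).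

Definition f1 : rat -> {poly MA} := polyC \o (@malgC (cmonom nat) rat).
Definition ev N : MA -> {poly MA} := mmap f1 (h1 N).

Lemma scale_monU {K : monomType} {R : ringType} (c : R) (m : K) :
  c%:MP * (<<m>> : {malg R[K]}) = << c *g m >>.
Proof.
rewrite mul_malgC; apply/malgP => k; rewrite mcoeffZ !mcoeffU.
by case: eqP => _; rewrite ?mulr1 ?mulr0.
Qed.

Lemma zN_id N (m : cmonom nat) : m N = 0%N -> zN N m = m.
Proof. by move=> mN; apply/eqP/cmP=> i; rewrite zNE; case: eqP => // ->. Qed.

Lemma h1_fresh N (m : cmonom nat) : m N = 0%N -> h1 N m = (<<m>> : MA)%:P.
Proof. by move=> mN; rewrite /h1 mN (zN_id mN) expr0 mul1r. Qed.

Lemma mmap_eq (K : choiceType) (R : zmodType) (S : ringType) (f : {additive R -> S})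
  (h h' : K -> S) g : (forall m, m \in msupp g -> h m = h' m) -> mmap f h g = mmap f h' g.
Proof. by move=> E; rewrite !mmapE; apply: eq_big_seq => m /E ->. Qed.

Lemma mmap_polyC (K : monomType) (R : comRingType) (g : {malg R[K]}) :
  mmap (polyC \o (@malgC K R)) (fun m => (<<m>> : {malg R[K]})%:P) g = g%:P.
Proof.
rewrite mmapE [in RHS](monalgE g) rmorph_sum; apply: eq_bigr => m _ /=.
by rewrite -polyCM scale_monU.
Qed.

Lemma ev_fresh N (f : MA) : (forall m, m \in msupp f -> m N = 0%N) -> ev N f = f%:P.
Proof.
move=> fr; rewrite /ev -(mmap_polyC f).
apply: mmap_eq => m /fr mN. exact: h1_fresh.
Qed.
Lemma ev_X N : ev N (<< ucm N >> : MA) = 'X.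
Proof.
rewrite /ev mmapU /f1 /h1 /= ucmE eqxx expr1.
have -> : zN N (ucm N) = 1M.
  by apply/eqP/cmP=> i; rewrite zNE cm1 ucmE; case: eqP => [//|/eqP]; rewrite eq_sym => /negbTE ->.
have E1 : (1%:MP : MA) = 1 by apply: mpolyC1E.
by rewrite E1 polyC1 (mul1r ('X * 1 : {poly MA})) (mulr1 ('X : {poly MA})).
Qed.

Section Gen.
Variable R : comNzRingType.

Definition Lf (a : R) D (Q : {poly R}) := \sum_(j < D.+1) a ^+ (D - j) * Q`_j.

Lemma LfD a D Q1 Q2 : Lf a D (Q1 + Q2) = Lf a D Q1 + Lf a D Q2.
Proof. by rewrite /Lf -big_split; apply: eq_bigr => j _; rewrite coefD mulrDr. Qed.

Lemma Lf0 a D : Lf a D 0 = 0.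
Proof. by rewrite /Lf big1 // => j _; rewrite coef0 mulr0. Qed.

Lemma LfC a D c Q : Lf a D (c%:P * Q) = c * Lf a D Q.
Proof.
by rewrite /Lf mulr_sumr; apply: eq_bigr => j _; rewrite coefCM mulrCA.
Qed.

Lemma Lf1 a D : Lf a D 1 = a ^+ D.
Proof.
rewrite /Lf big_ord_recl /= coef1 eqxx mulr1 subn0 big1 ?addr0 // => j _.
by rewrite coef1 /= mulr0.
Qed.

Lemma Lf_tele a D (P : {poly R}) : (size P <= D)%N -> Lf a D (P * (1 - a%:P * 'X)) = 0.
Proof.
move=> sP; rewrite /Lf.
have E j : (P * (1 - a%:P * 'X))`_j = P`_j - a * (if j == 0%N then 0 else P`_j.-1).
  by rewrite mulrBr mulr1 coefB mulrA [P * _]mulrC -mulrA coefCM coefMX.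
under eq_bigr => j _ do rewrite E mulrBr.
rewrite sumrB big_ord_recr /= (nth_default 0 sP) mulr0 addr0.
have H2 : \sum_(i < D.+1) a ^+ (D - i) * (a * (if (i : nat) == 0%N then 0 else P`_i.-1))
   = \sum_(i < D) a ^+ (D - i) * P`_i.
  rewrite big_ord_recl mulr0 mulr0 add0r.
  apply: eq_bigr => j _.
  rewrite mulrA -exprSr; congr (_ ^+ _ * _).
  by have := ltn_ord j; rewrite /bump /= subnSK.
by rewrite H2 subrr.
Qed.

Lemma Lf_sum a D (T : Type) (l : seq T) (F : T -> {poly R}) :
  Lf a D (\sum_(q <- l) F q) = \sum_(q <- l) Lf a D (F q).
Proof.
elim: l => [|q l IH]; first by rewrite !big_nil Lf0.
by rewrite !big_cons LfD IH.
Qed.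

Lemma finJac_gen (ev : nat -> R -> {poly R}) (X : nat -> R) (fresh : seq R -> nat) :
  (forall N x y, ev N (x + y) = ev N x + ev N y) ->
  (forall N x y, ev N (x * y) = ev N x * ev N y) ->
  (forall N, ev N 1 = 1) ->
  (forall N, ev N (X N) = 'X) ->
  (forall s x, x \in s -> ev (fresh s) x = x%:P) -> finitely_Jacobson R.
Proof.
move=> evD evM ev1 evX evC I [I0 ID IM] [s Hs] a Ja.
set N := fresh (a :: s).
have [l [Hl E1]] := Ja (X N).
have [x [r [Ix E]]] : exists x r, I x /\ \sum_(p <- l) p.1 * p.2 = x + r * (1 - a * X N).
  elim: l Hl {E1} => [|p l IH] Hl.
    by exists 0, 0; rewrite big_nil mul0r addr0.
  have [x [r [Ix E]]] := IH (fun q hq => Hl q (@mem_behead _ (p :: l) q hq)).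
  case: (Hl p (mem_head _ _)) => [Ip|Ep].
    exists (p.1 * p.2 + x), r; split; first by apply: ID => //; apply: IM.
    by rewrite big_cons E addrA.
  exists x, (p.1 + r); split => //.
  by rewrite big_cons E Ep mulrDl addrCA.
have [l2 [Hl2 Ex]] := (Hs x).1 Ix.
have e0 : ev N 0 = 0.
  have h := evD N 0 0; rewrite addr0 in h.
  by apply: (@addrI _ (ev N 0)); rewrite -h addr0.
have evS (T : Type) (l' : seq T) (F : T -> R) :
    ev N (\sum_(q <- l') F q) = \sum_(q <- l') ev N (F q).
  elim: l' => [|q l' IH]; last by rewrite !big_cons evD IH.
  by rewrite !big_nil e0.
have eN y : ev N (- y) = - ev N y.
  by apply: (@addrI _ (ev N y)); rewrite -evD !subrr e0.
have H0 := congr1 (ev N) E1; rewrite E evD evM in H0.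
have H : 1 = \sum_(q <- l2) ev N q.1 * q.2%:P + ev N r * (1 - a%:P * 'X).
  rewrite -[LHS](ev1 N) H0 Ex evS; congr (_ + _).
    apply: eq_big_seq => q /Hl2 qs; rewrite evM (evC _ q.2) //.
    by rewrite inE qs orbT.
  rewrite evD ev1 eN evM evX (evC _ a) //; last by rewrite mem_head.

set D := size (ev N r).
have HD : a ^+ D = \sum_(q <- l2) q.2 * Lf a D (ev N q.1).
  rewrite -(Lf1 a D) H LfD Lf_tele // addr0 Lf_sum.
  by apply: eq_bigr => q _; rewrite mulrC LfC.
exists D; exists [:: (1, a ^+ D)]; split.
  move=> p0; rewrite inE => /eqP -> /=; apply/Hs.
  exists [seq (Lf a D (ev N q.1), q.2) | q <- l2]; split.
    by move=> p1 /mapP [q qin ->] /=; apply: Hl2.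
  by rewrite HD big_map; apply: eq_bigr => q _; rewrite mulrC.
by rewrite big_cons big_nil addr0 mul1r.
Qed.

End Gen.

Definition fresh (s : seq MA) : nat :=
  \max_(p <- s) \max_(m <- msupp p) \max_(i <- finsupp m) i.+1.

Lemma fresh_ok (s : seq MA) (p : MA) (m : cmonom nat) :
  p \in s -> m \in msupp p -> m (fresh s) = 0%N.
Proof.
move=> ps mp; apply/eqP; rewrite cmE_eq0; apply/negP => Nm.
have h1 : ((fresh s).+1 <= \max_(i <- finsupp m) i.+1)%N.
  by exact: (@leq_bigmax_seq _ _ xpredT (fun i => i.+1) (fresh s)).
have h2 : (\max_(i <- finsupp m) i.+1 <= \max_(m' <- msupp p) \max_(i <- finsupp m') i.+1)%N.
  exact: (@leq_bigmax_seq _ _ xpredT (fun m0 : cmonom nat => \max_(i <- finsupp m0) i.+1) m).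
have h3 : (\max_(m' <- msupp p) \max_(i <- finsupp m') i.+1 <= fresh s)%N.
  exact: (@leq_bigmax_seq _ _ xpredT (fun p0 : MA => \max_(m0 <- msupp p0) \max_(i <- finsupp m0) i.+1) p).
by have := leq_trans h1 (leq_trans h2 h3); rewrite ltnn.
Qed.

Lemma part1 : finitely_Jacobson QX.
Proof.
apply: (@finJac_gen QX (fun N => ev N) (fun N => (<<ucm N>> : MA)) fresh).
- by move=> N x y; apply: rmorphD.
- by move=> N x y; apply: rmorphM.
- by move=> N; apply: rmorph1.
- by move=> N; apply: ev_X.
- by move=> s x xs; apply: ev_fresh => m; apply: fresh_ok.
Qed.

Notation FF := {fraction {poly rat}}.
Local Notation "x %:F" := (@FracField.tofrac _ x).

Definition Loc (x : FF) : Prop :=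
  exists p q : {poly rat}, q.[0] != 0 /\ x = p%:F / q%:F.

Lemma nz_of (q : {poly rat}) : q.[0] != 0 -> q%:F != 0 :> FF.
Proof. by move=> h; rewrite tofrac_eq0; apply: contraNneq h => ->; rewrite horner0. Qed.

Lemma Loc_poly (p : {poly rat}) : Loc p%:F.
Proof. by exists p, 1; rewrite hornerC oner_neq0 rmorph1 divr1. Qed.

Lemma Loc0 : Loc 0.
Proof. by have := Loc_poly 0; rewrite rmorph0. Qed.

Lemma Loc1 : Loc 1.
Proof. by have := Loc_poly 1; rewrite rmorph1. Qed.

Lemma addfracG (K : fieldType) (a b c d : K) : b != 0 -> d != 0 ->
  a / b + c / d = (a * d + c * b) / (b * d).
Proof. by move=> hb hd; field; rewrite hb hd. Qed.

Lemma mulfracG (K : fieldType) (a b c d : K) : b != 0 -> d != 0 ->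
  (a / b) * (c / d) = (a * c) / (b * d).
Proof. by move=> hb hd; field; rewrite hb hd. Qed.

Lemma LocD x y : Loc x -> Loc y -> Loc (x + y).
Proof.
move=> [p1 [q1 [h1 ->]]] [p2 [q2 [h2 ->]]].
exists (p1 * q2 + p2 * q1), (q1 * q2); rewrite hornerM mulf_neq0 //; split => //.
by rewrite !rmorphD !rmorphM /= addfracG ?nz_of.
Qed.

Lemma LocM x y : Loc x -> Loc y -> Loc (x * y).
Proof.
move=> [p1 [q1 [h1 ->]]] [p2 [q2 [h2 ->]]].
exists (p1 * p2), (q1 * q2); rewrite hornerM mulf_neq0 //; split => //.
by rewrite !rmorphM /= mulfracG ?nz_of.
Qed.

Lemma Loc_inv (w : {poly rat}) : w.[0] != 0 -> Loc (w%:F)^-1.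
Proof. by move=> h; exists 1, w; rewrite rmorph1 div1r. Qed.

Definition gg (k : nat) : FF :=
  if k is kk.+1 then
    (if choice.unpickle kk is Some w then (if w.[0] != 0 then ((w : {poly rat})%:F)^-1 else 0) else 0)
  else ('X : {poly rat})%:F.

Lemma Loc_gg k : Loc (gg k).
Proof.
case: k => [|k] /=; first exact: Loc_poly.
case: (choice.unpickle k) => [w|]; last exact: Loc0.
by case: ifP => [h|_]; [apply: Loc_inv | apply: Loc0].
Qed.

Lemma gg_pickle (w : {poly rat}) : w.[0] != 0 -> gg (choice.pickle w).+1 = (w%:F)^-1.
Proof. by move=> h; rewrite /= choice.pickleK h. Qed.

Lemma keyfieldG (K : fieldType) (Q T P : K) : Q != 0 -> Q - T * P != 0 ->
  1 - Q * (Q - T * P)^-1 * (1 - T * (P / Q)) = 0.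
Proof. by move=> hQ hW; field; rewrite hQ hW. Qed.

Lemma notJac_gen (R : comNzRingType) (phi : {rmorphism R -> FF}) (a : R) :
  phi a = ('X : {poly rat})%:F ->
  (forall f, Loc (phi f)) ->
  (forall q : {poly rat}, exists c, phi c = q%:F) ->
  (forall w : {poly rat}, w.[0] != 0 -> exists c, phi c = (w%:F)^-1) ->
  not_Jacobson R.
Proof.
move=> pa Lp surj inv.
exists (fun x => phi x = 0); split.
  split; first exact: rmorph0.
    by move=> x y hx hy; rewrite rmorphD hx hy addr0.
  by move=> r x hx; rewrite rmorphM hx mulr0.
exists a; split.
  move=> b; have [p [q [hq Eb]]] := Lp b.
  set w := q - 'X * p.
  have hw : w.[0] != 0.
    by rewrite /w hornerD hornerN hornerM hornerX mul0r subr0.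
  have [c1 Ec1] := surj q; have [c2 Ec2] := inv w hw.
  exists [:: (1, 1 - c1 * c2 * (1 - a * b)); (c1 * c2, 1 - a * b)]; split.
    move=> pp; rewrite !inE => /orP[/eqP->|/eqP->] /=; last by right.
    left; rewrite rmorphB rmorph1 !rmorphM rmorphB rmorph1 rmorphM Ec1 Ec2 pa Eb.
    rewrite /w rmorphB rmorphM /=; apply: keyfieldG; first exact: nz_of.
    by rewrite -rmorphM -rmorphB; apply: nz_of.
  by rewrite big_cons big_cons big_nil addr0 mul1r subrK.
move=> [n [l [Hl E]]].
have : phi (a ^+ n) = 0.
  rewrite E rmorph_sum big1_seq // => pp /Hl hp.
  by rewrite rmorphM hp mulr0.
rewrite rmorphXn pa => /eqP; rewrite expf_eq0 tofrac_eq0 polyX_eq0 andbF.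
by [].
Qed.


Definition h2 (m : cmonom nat) : FF := \prod_(i <- finsupp m) gg i ^+ m i.

Lemma h2_ext (m : cmonom nat) (d : {fset nat}) : (finsupp m `<=` d)%fset ->
  h2 m = \prod_(i <- d) gg i ^+ m i.
Proof.
move=> sd; rewrite /h2; apply: big_fset_incl => // x _ xn.
by move: xn; rewrite -cmE_eq0 => /eqP ->; rewrite expr0.
Qed.

Lemma h2_mm : mmorphism h2.
Proof.
split.
  move=> m1 m2; set d := (finsupp m1 `|` finsupp m2)%fset.
  rewrite (h2_ext (d := d)); last by rewrite mdomD.
  rewrite (h2_ext (m := m1) (d := d)) ?fsubsetUl // (h2_ext (m := m2) (d := d)) ?fsubsetUr //.
  by rewrite -big_split; apply: eq_bigr => i _; rewrite cmM exprD.
by rewrite /h2 mdom1 big_seq_fset0.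
Qed.
HB.instance Definition _ := isMultiplicative.Build _ _ h2 h2_mm.

Definition f2 : rat -> FF := (@FracField.tofrac _) \o (@polyC rat).
Definition phi : MA -> FF := mmap f2 h2.

Lemma LocX x n : Loc x -> Loc (x ^+ n).
Proof.
move=> hx; elim: n => [|n IH]; first by rewrite expr0; apply: Loc1.
by rewrite exprS; apply: LocM.
Qed.

Lemma Loc_phi f : Loc (phi f).
Proof.
rewrite /phi mmapE; apply: big_ind; [exact: Loc0 | exact: LocD |].
move=> m _; apply: LocM; first exact: Loc_poly.
rewrite /h2; apply: big_ind; [exact: Loc1 | exact: LocM |].
by move=> i _; apply: LocX; apply: Loc_gg.
Qed.

Lemma phiX k : phi (<<ucm k>> : MA) = gg k.
Proof.
rewrite /phi mmapU /h2 mdomU big_seq_fset1 cmUU expr1.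
by change (f2 1 * gg k = gg k); rewrite /f2 /= polyC1 rmorph1 mul1r.
Qed.

Lemma phiC c : phi (c%:MP : MA) = (c%:P)%:F.
Proof. by rewrite /phi mmapC. Qed.

Definition P2A (q : {poly rat}) : MA :=
  \sum_(i < size q) (q`_i)%:MP * (<<ucm 0>> : MA) ^+ i.

Lemma phi_P2A q : phi (P2A q) = q%:F.
Proof.
rewrite /P2A /phi rmorph_sum /=.
rewrite -[in RHS](coefK q) poly_def rmorph_sum; apply: eq_bigr => i _.
rewrite rmorphM rmorphXn -mul_polyC rmorphM rmorphXn.
congr (_ * _ ^+ _); [exact: phiC | exact: (phiX 0)].
Qed.

Lemma part2 : not_Jacobson QX.
Proof.
apply: (@notJac_gen QX (mmap f2 h2) (<<ucm 0>> : MA)).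
- exact: (phiX 0).
- exact: Loc_phi.
- by move=> q; exists (P2A q); apply: phi_P2A.
- move=> w hw; exists (<<ucm (choice.pickle w).+1>> : MA).
  by rewrite -gg_pickle //; exact: (phiX (choice.pickle w).+1).
Qed.

Theorem mainTheorem11 : finitely_Jacobson QX /\ not_Jacobson QX.
Proof. by split; [exact: part1 | exact: part2]. Qed.
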